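(* Let $r$ be a positive integer and let $x\in\{0,1\}^\omega$ be an $r$-power free Sturmian word. Then for every infinite sequence $V_0,V_1,V_2,\dots$ of words $V_i\in\{0,1\}^+$ there exist $k\ge1$, indices $0\le n_1<n_2<\cdots<n_k$ and a permutation $\sigma$ of $\{1,\dots,k\}$ such that $V_{n_{\sigma(1)}}V_{n_{\sigma(2)}}\cdots V_{n_{\sigma(k)}}\notin\mathrm{Fact}(x)$.
   Context: $\mathrm{Fact}(x)$ is the set of non-empty finite factors $x_ix_{i+1}\cdots x_{i+j}$ ($i,j\ge0$) of $x=x_0x_1\cdots$. A word $x\in\{0,1\}^\omega$ is Sturmian if it is aperiodic (no suffix of $x$ is of the form $u^\omega=uuu\cdots$ with $u$ non-empty) and balanced: for all factors $u,v$ of $x$ with $|u|=|v|$ and each letter $a\in\{0,1\}$, $\big||u|_a-|v|_a\big|\le1$, where $|u|_a$ is the number of occurrences of $a$ in $u$. A word $x$ is $r$-power free if $u^r\notin\mathrm{Fact}(x)$ for every $u\in\mathrm{Fact}(x)$, where $u^r$ denotes $u$ concatenated with itself $r$ times. *)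

(* Defs.v *)
From mathcomp Require Import all_boot all_order all_fingroup.
Set Implicit Arguments. Unset Strict Implicit. Unset Printing Implicit Defensive.

(* Infinite words over {0,1} are encoded as nat -> bool (false = 0, true = 1);
   finite words as seq bool. *)
Definition infword := nat -> bool.

Definition subword (x : infword) (i l : nat) : seq bool :=
  [seq x (i + j) | j <- iota 0 l].

Definition is_factor (u : seq bool) (x : infword) : Prop :=
  u <> [::] /\ exists i, u = subword x i (size u).

Definition occ (a : bool) (u : seq bool) : nat := count_mem a u.

Definition aperiodic (x : infword) : Prop :=
  ~ (exists p N, 0 < p /\ forall n, N <= n -> x (n + p) = x n).

Definition balanced (x : infword) : Prop :=
  forall u v, is_factor u x -> is_factor v x -> size u = size v ->
    forall a : bool, (occ a u <= occ a v + 1) /\ (occ a v <= occ a u + 1).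

Definition sturmian (x : infword) : Prop := aperiodic x /\ balanced x.

Definition wpow (u : seq bool) (r : nat) : seq bool := flatten (nseq r u).

Definition power_free (r : nat) (x : infword) : Prop :=
  forall u, is_factor u x -> ~ is_factor (wpow u r) x.

(* Main.v *)
Require Import Defs.
From mathcomp Require Import all_boot all_order all_fingroup.
From Stdlib Require Import Classical.
From mathcomp Require Import zify.

Lemma size_subword x i l : size (subword x i l) = l.
Proof. by rewrite /subword size_map size_iota. Qed.

Lemma subwordD x i m n :
  subword x i (m + n) = subword x i m ++ subword x (i + m) n.
Proof.
rewrite /subword iotaD map_cat; congr (_ ++ _).
rewrite add0n -[m]addn0 iotaDl -map_comp addn0; apply: eq_map => j /=.
by rewrite addnA.
Qed.

Lemma factor_infix x a u b :
  is_factor (a ++ u ++ b) x -> u <> [::] -> is_factor u x.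
Proof.
move=> [_ [i Hi]] Hu; split => //; exists (i + size a).
move: Hi; rewrite !size_cat !subwordD => /eqP.
rewrite eqseq_cat ?size_subword // => /andP [_ /eqP].
move/eqP; rewrite eqseq_cat ?size_subword // => /andP [/eqP -> _].
by rewrite size_subword.
Qed.

Lemma balanced_no x s :
  balanced x -> is_factor (false :: s ++ [:: false]) x ->
  is_factor (true :: s ++ [:: true]) x -> False.
Proof.
move=> Hb H1 H2.
have Hsz : size (false :: s ++ [:: false]) = size (true :: s ++ [:: true]) by rewrite /= !size_cat.
have [_ h] := Hb _ _ H1 H2 Hsz true.
move: h; rewrite /occ /= !count_cat /= !addn0; lia.
Qed.

Definition LSw x w := is_factor (false :: w) x /\ is_factor (true :: w) x.

Lemma LS_key x : balanced x -> forall u s v, size u = size v ->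
  LSw x (s ++ u) -> LSw x (s ++ v) -> u = v.
Proof.
move=> Hb; elim=> [|a u IH] s [|b v] //= [] Hs [H1 H2] [H3 H4].
have E : forall c w, s ++ c :: w = (rcons s c) ++ w by move=> c w; rewrite -cats1 -catA.
case: (eqVneq a b) => [Eab|Hab].
  subst b; have -> : u = v by apply: (IH (rcons s a)) => //; rewrite -E; split.
  by [].
exfalso.
have P : forall d c w, is_factor (d :: s ++ c :: w) x -> is_factor (d :: s ++ [:: c]) x.
  move=> d c w Hf; apply: (@factor_infix x [::] _ (w)) => //.
  by move: Hf; rewrite /= -catA.
case: a b Hab H1 H2 H3 H4 => [] [] // _ H1 H2 H3 H4.
- by apply: (balanced_no _ _ Hb); [apply: P H3 | apply: P H2].
- by apply: (balanced_no _ _ Hb); [apply: P H1 | apply: P H4].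
Qed.

Lemma LS_uniq x u v : balanced x -> size u = size v ->
  LSw x u -> LSw x v -> u = v.
Proof. move=> Hb Hs; exact: (LS_key _ Hb _ [::] _ Hs). Qed.

Lemma LS_take x n w : LSw x w -> LSw x (take n w).
Proof.
move=> [H1 H2]; split.
- apply: (@factor_infix x [::] _ (drop n w)) => //.
  by rewrite /= -/(cat _ _) cat_take_drop.
- apply: (@factor_infix x [::] _ (drop n w)) => //.
  by rewrite /= cat_take_drop.
Qed.

Lemma lastdiff (X Y : seq bool) : size X = size Y -> X <> Y ->
  exists X' Y' a s, X = X' ++ a :: s /\ Y = Y' ++ (~~ a) :: s.
Proof.
elim: X Y => [|x0 X IH] [|y0 Y] //= [] Hs Hne.
case: (eqVneq X Y) => [EXY|NXY].
- subst; exists [::], [::], x0, Y; split => //.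
  by case: x0 y0 Hne => [] [].
- have [X' [Y' [a [s [-> ->]]]]] := IH Y Hs (elimN eqP NXY).
  by exists (x0 :: X'), (y0 :: Y'), a, s.
Qed.

Lemma periodic (C E : seq bool) : E = take (size E) (C ++ E) ->
  forall n, n * size C <= size E -> take (n * size C) E = wpow C n.
Proof.
move=> HE; elim=> [|n IH] Hn; first by rewrite mul0n take0.
have -> : take (n.+1 * size C) E = take (n.+1 * size C) (C ++ E).
  by rewrite {1}HE take_takel.
rewrite take_cat mulSn ltnNge leq_addr /= addKn IH //.
by rewrite mulSn in Hn; lia.
Qed.

Lemma size_wpow u n : size (wpow u n) = n * size u.
Proof. elim: n => [|n IH] //=; by rewrite size_cat IH mulSn. Qed.
Lemma good_uniq (x : infword) (V : nat -> seq bool)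
  (H : forall k (n : 'I_k -> nat) (sigma : 'S_k), 1 <= k ->
        (forall i j : 'I_k, (i < j)%N -> (n i < n j)%N) ->
        is_factor (flatten [seq V (n (sigma i)) | i <- enum 'I_k]) x)
  (p : seq nat) : uniq p -> 0 < size p -> is_factor (flatten (map V p)) x.
Proof.
move=> Up Hp.
set k := size p. set s := sort leq p.
have ps : perm_eq s p by rewrite /s (perm_sort leq p) perm_refl.
have szs : size s = k by rewrite (perm_size ps).
have ss : sorted ltn s by rewrite ltn_sorted_uniq_leq sort_uniq Up sort_sorted //; exact: leq_total.
pose n := fun i : 'I_k => nth 0 s i.
have ninc : forall i j : 'I_k, (i < j)%N -> (n i < n j)%N.
  move=> i j ij; apply: (sorted_ltn_nth ltn_trans) => //; by rewrite inE /= szs ltn_ord.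
have memp : forall i : 'I_k, nth 0 p i \in s.
  by move=> i; rewrite (perm_mem ps) mem_nth.
have idxlt : forall i : 'I_k, index (nth 0 p i) s < k.
  by move=> i; have := index_mem (nth 0 p i) s; rewrite memp szs.
pose f := fun i : 'I_k => insubd i (index (nth 0 p i) s) : 'I_k.
have fv : forall i, val (f i) = index (nth 0 p i) s.
  by move=> i; rewrite /f val_insubd idxlt.
have finj : injective f.
  move=> i j /(congr1 val); rewrite !fv => /(congr1 (nth 0 s)); rewrite !nth_index //.
  move/eqP; rewrite nth_uniq // => /eqP; apply: val_inj.
pose sigma := perm finj.
have := H k n sigma Hp ninc.
congr (is_factor (flatten _) x).
have -> : [seq V (n (sigma i)) | i <- enum 'I_k] = [seq V (nth 0 p (val i)) | i : 'I_k <- enum 'I_k].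
  apply: eq_map => i; rewrite /n permE fv nth_index //.
have e : p = map (nth 0 p) (map val (enum 'I_k)).
  by rewrite val_enum_ord -/(mkseq _ _) mkseq_nth.
by rewrite [in RHS]e -!map_comp.
Qed.

Lemma size_flatten_ge (V : nat -> seq bool) l : (forall i, V i <> [::]) ->
  size l <= size (flatten (map V l)).
Proof.
move=> HV; elim: l => [|a l IH] //=; rewrite size_cat.
have : 0 < size (V a) by rewrite lt0n size_eq0; apply/eqP; exact: HV.
lia.
Qed.

Lemma comm_flatten (A : seq bool) (l : seq (seq bool)) :
  all (fun B => A ++ B == B ++ A) l -> A ++ flatten l = flatten l ++ A.
Proof.
elim: l => [|B l IH] /=; first by rewrite cats0.
move=> /andP [/eqP h hl]; by rewrite catA h -(catA B A) IH // catA.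
Qed.

Theorem lemma2p4 (r : nat) (x : infword) :
  0 < r -> sturmian x -> power_free r x ->
  forall V : nat -> seq bool, (forall i, V i <> [::]) ->
  exists (k : nat) (n : 'I_k -> nat) (sigma : 'S_k),
    1 <= k /\
    (forall i j : 'I_k, (i < j)%N -> (n i < n j)%N) /\
    ~ is_factor (flatten [seq V (n (sigma i)) | i <- enum 'I_k]) x.
Proof.
move=> r0 [_ Hb] Hpf V HV.
apply: NNPP => Hno.
have H : forall k (n : 'I_k -> nat) (sigma : 'S_k), 1 <= k ->
    (forall i j : 'I_k, (i < j)%N -> (n i < n j)%N) ->
    is_factor (flatten [seq V (n (sigma i)) | i <- enum 'I_k]) x.
  move=> k n sigma k1 ninc; apply: NNPP => nf; apply: Hno; by exists k, n, sigma.
have G := good_uniq _ _ H.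
have szpos : forall i, 0 < size (V i).
  by move=> i; rewrite lt0n size_eq0; apply/eqP; exact: HV.
set A := V 0.
have FA : is_factor A x by have := G [:: 0] isT isT; rewrite /= cats0.
pose N := r * size A.
case: (boolP (all (fun i => A ++ V i == V i ++ A) (iota 1 N))) => [Hall|].
- pose W := flatten (map V (iota 1 N)).
  have FAW : is_factor (A ++ W) x.
    have := G (0 :: iota 1 N); rewrite /= mem_iota iota_uniq size_iota; apply => //.
  have comm : A ++ W = W ++ A by apply: comm_flatten; rewrite all_map.
  have hW : W = take (size W) (A ++ W) by rewrite comm take_size_cat.
  have szW : N <= size W by have := size_flatten_ge _ (iota 1 N) HV; rewrite size_iota.
  have P := periodic _ _ hW _ szW.
  apply: (Hpf A FA).
  apply: (@factor_infix x A _ (drop N W)).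
    by rewrite -P cat_take_drop.
  move/eqP; rewrite -size_eq0 size_wpow; have := szpos 0; rewrite -/A; lia.
- move/allPn => [i iin nc]; rewrite mem_iota in iin.
  set B := V i. set C := V i.+1. pose M := r * size C.
  pose E := flatten (map V (iota i.+2 M)).
  have F1 : is_factor (A ++ B ++ E) x.
    have := G [:: 0, i & iota i.+2 M]; rewrite /= !inE !mem_iota iota_uniq; apply; lia.
  have F2 : is_factor (B ++ A ++ E) x.
    have := G [:: i, 0 & iota i.+2 M]; rewrite /= !inE !mem_iota iota_uniq; apply; lia.
  have F3 : is_factor (A ++ B ++ C ++ E) x.
    have := G [:: 0, i, i.+1 & iota i.+2 M]; rewrite /= !inE !mem_iota iota_uniq; apply; lia.
  have F4 : is_factor (B ++ A ++ C ++ E) x.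
    have := G [:: i, 0, i.+1 & iota i.+2 M]; rewrite /= !inE !mem_iota iota_uniq; apply; lia.
  have neq : A ++ B <> B ++ A by move/eqP; apply/negP.
  have szAB : size (A ++ B) = size (B ++ A) by rewrite !size_cat addnC.
  have [X' [Y' [a [s [hX hY]]]]] := lastdiff _ _ szAB neq.
  have LS : forall T, is_factor (A ++ B ++ T) x -> is_factor (B ++ A ++ T) x ->
      LSw x (s ++ T).
    move=> T h1 h2.
    have g1 : is_factor (a :: s ++ T) x.
      move: h1; rewrite catA hX -catA => h1.
      apply: (@factor_infix x X' _ [::]) => //; rewrite cats0 //.
    have g2 : is_factor (~~ a :: s ++ T) x.
      move: h2; rewrite catA hY -catA => h2.
      apply: (@factor_infix x Y' _ [::]) => //; rewrite cats0 //.
    by case: a hX hY g1 g2 => _ _ g1 g2; split.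
  have L1 := LS E F1 F2.
  have L2 := LS (C ++ E) F3 F4.
  have L2' := LS_take _ (size (s ++ E)) _ L2.
  have szeq : size (take (size (s ++ E)) (s ++ C ++ E)) = size (s ++ E).
    by rewrite size_takel // !size_cat; lia.
  have eq := LS_uniq _ _ _ Hb szeq L2' L1.
  have hE : E = take (size E) (C ++ E).
    move: eq; rewrite size_cat takeD take_size_cat // drop_size_cat // => /eqP.
    by rewrite eqseq_cat // eqxx /= => /eqP.
  have szE : M <= size E by have := size_flatten_ge _ (iota i.+2 M) HV; rewrite size_iota.
  have P := periodic _ _ hE _ szE.
  have Mpos : 0 < M by have := szpos i.+1; rewrite /M -/C; lia.
  have FE : is_factor E x.
    apply: (@factor_infix x (A ++ B) _ [::]); first by rewrite cats0 -catA.
    have E0 : 0 < size E := leq_trans Mpos szE.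
    by move=> hE0; move: E0; rewrite hE0.
  have FC : is_factor C x by have := G [:: i.+1] isT isT; rewrite /= cats0.
  apply: (Hpf C FC).
  apply: (@factor_infix x [::] _ (drop M E)).
    by rewrite /= -P cat_take_drop.
  by move/eqP; rewrite -size_eq0 size_wpow; lia.
Qed.
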